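(* Let $\varrho,\sigma$ be density operators on a finite-dimensional Hilbert space and $\alpha\in(0,1)$. Suppose $D_\alpha^{\mathrm{test}}(\varrho\|\sigma)=D_\alpha^{\mathrm{meas}}(\varrho\|\sigma)$. Then for every orthogonal projection $P$ attaining $\max_{P\text{ projection}}D_\alpha(\mathcal P(\varrho)\|\mathcal P(\sigma))$, with $P^\perp:=I-P$, \[ (\operatorname{Tr}\sigma P)P\varrho P=(\operatorname{Tr}\varrho P)P\sigma P,\qquad (\operatorname{Tr}\sigma P^\perp)P^\perp\varrho P^\perp=(\operatorname{Tr}\varrho P^\perp)P^\perp\sigma P^\perp. \] If moreover $\varrho\ne\sigma$, then $\varrho^0\le\sigma^0$ implies $P\sigma P\ne0$ and $P^\perp\sigma P^\perp\neq0$, and $\varrho^0\ge\sigma^0$ implies $P\varrho P\ne0$ and $P^\perp\varrho P^\perp\ne0$.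
   Context: $A^0$ denotes the support projection of a PSD operator $A$. For probability vectors $p,q$ and $\alpha\in(0,1)$, $D_\alpha(p\|q)=\frac{1}{\alpha-1}\log\sum_xp(x)^\alpha q(x)^{1-\alpha}$. For an operator $0\le T\le I$, $\mathcal T(X):=(\operatorname{Tr}XT,\operatorname{Tr}X(I-T))$ (written $\mathcal P$ when $T=P$ is a projection). $D_\alpha^{\mathrm{test}}(\varrho\|\sigma):=\max_{0\le T\le I}D_\alpha(\mathcal T(\varrho)\|\mathcal T(\sigma))$, which equals the maximum of $D_\alpha(\mathcal P(\varrho)\|\mathcal P(\sigma))$ over projections $P$. For a finite-outcome POVM $M$, $\mathcal M(\varrho):=(\operatorname{Tr}M_x\varrho)_x$, and $D_\alpha^{\mathrm{meas}}(\varrho\|\sigma):=\sup_MD_\alpha(\mathcal M(\varrho)\|\mathcal M(\sigma))$. *)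

(* Defs.v *)
From HB Require Import structures.
From mathcomp Require Import all_boot all_order all_algebra.
From mathcomp Require Import spectral.
From mathcomp Require Import complex.
From mathcomp Require Import classical_sets boolp reals ereal exp.

Set Implicit Arguments.
Unset Strict Implicit.
Unset Printing Implicit Defensive.

Import Order.TTheory GRing.Theory Num.Theory.
Local Open Scope ring_scope.
Local Open Scope classical_set_scope.

Section QDefs.
Variable R : realType.
Local Notation C := (R[i]).

Definition adj {m n} (A : 'M[C]_(m, n)) : 'M[C]_(n, m) := (map_mx conjc A)^T.

(* positive semidefinite: <v, A v> >= 0 for every vector v (complex order,
   so in particular <v, A v> is real); together with hermiticity *)
Definition psd {n} (A : 'M[C]_n) : Prop :=
  adj A = A /\ forall v : 'cV[C]_n, 0 <= (adj v *m A *m v) 0 0.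

Definition loewner_le {n} (A B : 'M[C]_n) : Prop := psd (B - A).

Definition density {n} (rho : 'M[C]_n) : Prop := psd rho /\ \tr rho = 1.

Definition projection {n} (P : 'M[C]_n) : Prop := P *m P = P /\ adj P = P.

Definition test {n} (T : 'M[C]_n) : Prop := psd T /\ psd (1%:M - T).

(* support projection A^0: orthogonal projection onto the range of A
   (for hermitian A, its row space equals the conjugate of its range) *)
Definition supp {n} (A : 'M[C]_n) : 'M[C]_n := proj_ortho A.

(* Tr X T as a real number (it is real for hermitian X, T) *)
Definition trR {n} (X T : 'M[C]_n) : R := complex.Re (\tr (X *m T)).

Definition Dalpha (alpha : R) {k} (p q : 'I_k -> R) : \bar R :=
  let Q := \sum_(x < k) p x `^ alpha * q x `^ (1 - alpha) in
  if Q == 0 then +oo%E else (((alpha - 1)^-1 * ln Q)%:E)%E.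

Definition test_ch {n} (T X : 'M[C]_n) : 'I_2 -> R :=
  fun x => if x == ord0 then trR X T else trR X (1%:M - T).

Definition povm {n k} (M : 'I_k -> 'M[C]_n) : Prop :=
  (forall x, psd (M x)) /\ \sum_(x < k) M x = 1%:M.

Definition meas_ch {n k} (M : 'I_k -> 'M[C]_n) (X : 'M[C]_n) : 'I_k -> R :=
  fun x => trR X (M x).

Definition Dtest (alpha : R) {n} (rho sigma : 'M[C]_n) : \bar R :=
  ereal_sup [set Dalpha alpha (test_ch T rho) (test_ch T sigma) | T in [set T | test T]].

Definition Dmeas (alpha : R) {n} (rho sigma : 'M[C]_n) : \bar R :=
  ereal_sup [set d | exists k (M : 'I_k -> 'M[C]_n),
     povm M /\ d = Dalpha alpha (meas_ch M rho) (meas_ch M sigma)].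

End QDefs.

(* Main.v *)
Require Import Defs.
From mathcomp Require Import all_boot all_order all_algebra.
From mathcomp Require Import spectral complex sesquilinear.
From mathcomp Require Import classical_sets boolp reals ereal exp.
From mathcomp Require Import ring lra.
Set Implicit Arguments.
Unset Strict Implicit.
Unset Printing Implicit Defensive.
Import Order.TTheory GRing.Theory Num.Theory.
Local Open Scope ring_scope.
Section Real.
Variable R : realType.
Variable alpha : R.
Hypothesis a0 : 0 < alpha.
Hypothesis a1 : alpha < 1.

Definition ff (a b : R) := a `^ alpha * b `^ (1 - alpha).

Lemma ff_ge0 a b : 0 <= ff a b.
Proof. by rewrite mulr_ge0 ?powR_ge0. Qed.

Lemma ff0l b : ff 0 b = 0.
Proof. by rewrite /ff powR0 ?mul0r // gt_eqF. Qed.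

Lemma ff0r a : ff a 0 = 0.
Proof. by rewrite /ff (powR0 (x := 1 - alpha)) ?mulr0 // gt_eqF // subr_gt0. Qed.

Lemma ff11 : ff 1 1 = 1.
Proof. by rewrite /ff !powR1 mulr1. Qed.

Lemma amgm x y : 0 <= x -> 0 <= y -> ff x y <= alpha * x + (1 - alpha) * y.
Proof.
move=> x0 y0.
have b0 : 0 < 1 - alpha by rewrite subr_gt0.
have := @conjugate_powR _ (x `^ alpha) (y `^ (1 - alpha)) alpha^-1 (1 - alpha)^-1
  (powR_ge0 _ _) (powR_ge0 _ _).
rewrite !invr_gt0 a0 b0 !invrK => /(_ isT isT).
rewrite -!powRrM !mulfV ?gt_eqF // !powRr1 // => /(_ _).
rewrite addrC subrK; move=> /(_ erefl); rewrite /ff.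
by rewrite (mulrC x) (mulrC y).
Qed.

Lemma amgm_eq x y : 0 <= x -> 0 <= y ->
  alpha * x + (1 - alpha) * y <= ff x y -> x = y.
Proof.
move=> x0 y0 h.
set u := Num.sqrt x; set v := Num.sqrt y.
have u0 : 0 <= u by apply: sqrtr_ge0.
have v0 : 0 <= v by apply: sqrtr_ge0.
have xu : x = u * u by rewrite -expr2 sqr_sqrtr.
have yv : y = v * v by rewrite -expr2 sqr_sqrtr.
have e : ff x y = ff u v * ff u v.
  by rewrite xu yv /ff !powRM // mulrACA.
have h1 := @amgm _ _ u0 v0.
have h2 : ff u v * ff u v <= (alpha * u + (1 - alpha) * v) * (alpha * u + (1 - alpha) * v).
  by apply: ler_pM => //; apply: ff_ge0.
have : (u - v) ^+ 2 <= 0.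
  rewrite e in h; rewrite {1}xu {1}yv in h.
  have hab : 0 < alpha * (1 - alpha) by rewrite mulr_gt0 // subr_gt0.
  nra.
rewrite expr2 => uv.
have : u = v by nra.
by move=> uvE; rewrite xu yv uvE.
Qed.

Lemma holder2 a b c d : 0 <= a -> 0 <= b -> 0 <= c -> 0 <= d ->
  ff a b + ff c d <= ff (a + c) (b + d).
Proof.
move=> ha hb hc hd.
have [S0|S0] := eqVneq (a + c) 0.
  have -> : a = 0 by lra.
  have -> : c = 0 by lra.
  by rewrite addr0 !ff0l addr0.
have [T0|T0] := eqVneq (b + d) 0.
  have -> : b = 0 by lra.
  have -> : d = 0 by lra.
  by rewrite addr0 !ff0r addr0.
have Sp : 0 < a + c by rewrite lt_def S0 addr_ge0.
have Tp : 0 < b + d by rewrite lt_def T0 addr_ge0.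
set S := a + c in S0 Sp *; set T := b + d in T0 Tp *.
have S0' := ltW Sp; have T0' := ltW Tp.
have sc z w : 0 <= z -> 0 <= w -> ff z w = ff S T * ff (z / S) (w / T).
  move=> z0 w0; rewrite /ff mulrACA -!powRM ?divr_ge0 //.
  by rewrite (mulrC S) (mulrC T) !divfK.
rewrite (sc a b) // (sc c d) // -mulrDr.
apply: (@le_trans _ _ (ff S T * 1)); last by rewrite mulr1.
apply: ler_wpM2l; first exact: ff_ge0.
have hA := @amgm (a/S) (b/T) (divr_ge0 ha S0') (divr_ge0 hb T0').
have hC := @amgm (c/S) (d/T) (divr_ge0 hc S0') (divr_ge0 hd T0').
apply: le_trans (lerD hA hC) _.
rewrite addrACA -!mulrDr -!mulrDl !divff //; lra.
Qed.

Lemma holder2_eq a b c d : 0 <= a -> 0 <= b -> 0 <= c -> 0 <= d ->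
  ff (a + c) (b + d) <= ff a b + ff c d -> a * d = b * c.
Proof.
move=> ha hb hc hd.
have [S0|S0] := eqVneq (a + c) 0.
  have -> : a = 0 by lra.
  have -> : c = 0 by lra.
  by rewrite !mul0r mulr0.
have [T0|T0] := eqVneq (b + d) 0.
  have -> : b = 0 by lra.
  have -> : d = 0 by lra.
  by rewrite !mul0r mulr0.
have Sp : 0 < a + c by rewrite lt_def S0 addr_ge0.
have Tp : 0 < b + d by rewrite lt_def T0 addr_ge0.
set S := a + c in S0 Sp *; set T := b + d in T0 Tp *.
have S0' := ltW Sp; have T0' := ltW Tp.
have sc z w : 0 <= z -> 0 <= w -> ff z w = ff S T * ff (z / S) (w / T).
  move=> z0 w0; rewrite /ff mulrACA -!powRM ?divr_ge0 //.
  by rewrite (mulrC S) (mulrC T) !divfK.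
have K0 : 0 < ff S T by rewrite /ff mulr_gt0 // powR_gt0.
rewrite (sc a b) // (sc c d) // -mulrDr.
move=> h0.
have h : 1 <= ff (a / S) (b / T) + ff (c / S) (d / T) by rewrite -(ler_pM2l K0) mulr1.
have h1 := @amgm _ _ (divr_ge0 ha S0') (divr_ge0 hb T0').
have h2 := @amgm _ _ (divr_ge0 hc S0') (divr_ge0 hd T0').
have e1 : alpha * (a / S) + (1 - alpha) * (b / T) + (alpha * (c / S) + (1 - alpha) * (d / T)) = 1.
  rewrite addrACA -!mulrDr -!mulrDl !divff //; lra.
have : a / S = b / T.
  apply: amgm_eq; rewrite ?divr_ge0 //; lra.
move=> /(congr1 (fun z => z * S * T)).
rewrite divfK // [b / T * S]mulrC mulrA divfK // => e.
have -> : a * d = a * T - a * b by rewrite /T; ring.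
rewrite e /S; ring.
Qed.

Lemma ff_hom l a b : 0 <= l -> 0 <= a -> 0 <= b -> ff (l * a) (l * b) = l * ff a b.
Proof.
move=> l0 ha hb; rewrite /ff !powRM // mulrACA -powRD; last first.
  by rewrite addrC subrK oner_eq0.
by rewrite addrC subrK powRr1.
Qed.

Lemma ff_concave t a b c d : 0 <= t <= 1 -> 0 <= a -> 0 <= b -> 0 <= c -> 0 <= d ->
  (1 - t) * ff a b + t * ff c d <= ff ((1 - t) * a + t * c) ((1 - t) * b + t * d).
Proof.
move=> /andP[t0 t1] ha hb hc hd.
have t1' : 0 <= 1 - t by rewrite subr_ge0.
rewrite -!ff_hom //; apply: holder2; exact: mulr_ge0.
Qed.

Definition DQ (Q : R) : \bar R :=
  if Q == 0 then +oo%E else (((alpha - 1)^-1 * ln Q)%:E)%E.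

Lemma DQ_lt Q1 Q2 : 0 <= Q1 -> Q1 < Q2 -> (DQ Q2 < DQ Q1)%E.
Proof.
move=> q1 q12; have q2 : 0 < Q2 by apply: le_lt_trans q12.
rewrite /DQ gt_eqF //; case: eqP => [_|/eqP Q10]; first by rewrite ltey.
rewrite lte_fin ltr_nM2l ?invr_lt0 ?subr_lt0 //.
by rewrite ltr_ln // posrE lt_def Q10.
Qed.

Lemma DQ_le Q1 Q2 : 0 <= Q1 -> Q1 <= Q2 -> (DQ Q2 <= DQ Q1)%E.
Proof.
move=> q1 h; have [->|ne] := eqVneq Q1 Q2; first by [].
by apply/ltW/DQ_lt => //; rewrite lt_def eq_sym ne h.
Qed.

Lemma DQ_rev Q1 Q2 : 0 <= Q2 -> (DQ Q2 <= DQ Q1)%E -> Q1 <= Q2.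
Proof.
move=> q2 h; rewrite leNgt; apply/negP => /(DQ_lt q2).
by rewrite ltNge h.
Qed.

Lemma DQ1 : DQ 1 = 0%E.
Proof. by rewrite /DQ oner_eq0 ln1 mulr0. Qed.


Definition FF n (r s mu : 'I_n -> R) :=
  ff (\sum_i mu i * r i) (\sum_i mu i * s i) +
  ff (\sum_i (1 - mu i) * r i) (\sum_i (1 - mu i) * s i).

Lemma sum_conv n (r mu mu0 mu1 : 'I_n -> R) t :
  (forall j, mu j = (1 - t) * mu0 j + t * mu1 j) ->
  \sum_i mu i * r i = (1 - t) * (\sum_i mu0 i * r i) + t * (\sum_i mu1 i * r i).
Proof.
move=> h; rewrite !mulr_sumr -big_split; apply: eq_bigr => j _ /=.
rewrite h; ring.
Qed.

Lemma sum_ge0' n (r mu : 'I_n -> R) : (forall i, 0 <= r i) -> (forall i, 0 <= mu i) ->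
  0 <= \sum_i mu i * r i.
Proof. by move=> hr hm; apply: sumr_ge0 => i _; apply: mulr_ge0. Qed.

Lemma FF_concave n (r s mu mu0 mu1 : 'I_n -> R) t :
  0 <= t <= 1 ->
  (forall i, 0 <= r i) -> (forall i, 0 <= s i) ->
  (forall i, 0 <= mu0 i <= 1) -> (forall i, 0 <= mu1 i <= 1) ->
  (forall j, mu j = (1 - t) * mu0 j + t * mu1 j) ->
  (1 - t) * FF r s mu0 + t * FF r s mu1 <= FF r s mu.
Proof.
move=> ht hr hs h0 h1 h.
have h' : forall j, 1 - mu j = (1 - t) * (1 - mu0 j) + t * (1 - mu1 j).
  by move=> j; rewrite h; ring.
have g0 i : 0 <= mu0 i by case/andP: (h0 i).
have g1 i : 0 <= mu1 i by case/andP: (h1 i).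
have g0' i : 0 <= 1 - mu0 i by case/andP: (h0 i) => _; rewrite subr_ge0.
have g1' i : 0 <= 1 - mu1 i by case/andP: (h1 i) => _; rewrite subr_ge0.
rewrite /FF (sum_conv r h) (sum_conv s h) (sum_conv r h') (sum_conv s h').
rewrite mulrDr mulrDr addrACA.
by apply: lerD; apply: ff_concave; rewrite ?sum_ge0'.
Qed.

Lemma binarize n (r s mu : 'I_n -> R) :
  (forall i, 0 <= r i) -> (forall i, 0 <= s i) -> (forall i, 0 <= mu i <= 1) ->
  exists mu', (forall i, mu' i * mu' i = mu' i) /\ FF r s mu' <= FF r s mu.
Proof.
move=> hr hs.
suff H : forall k mu, (forall i, 0 <= mu i <= 1) ->
    (forall i : 'I_n, (k <= i)%N -> mu i * mu i = mu i) ->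
    exists mu', (forall i, mu' i * mu' i = mu' i) /\ FF r s mu' <= FF r s mu.
  by move=> hmu; apply: (H n mu hmu) => i; rewrite leqNgt ltn_ord.
elim=> [|k IH] mu0 hmu hb.
  by exists mu0; split => // i; apply: hb.
case: (ltnP k n) => [kn|nk]; last first.
  apply: IH => // i hi; exfalso; have := ltn_ord i.
  by rewrite ltnNge (leq_trans nk hi).
set i0 := Ordinal kn.
pose m0 := fun j => if j == i0 then 0 else mu0 j.
pose m1 := fun j => if j == i0 then 1 else mu0 j.
have hm0 : forall i, 0 <= m0 i <= 1.
  by move=> i; rewrite /m0; case: eqP => _ //; rewrite lexx ler01.
have hm1 : forall i, 0 <= m1 i <= 1.
  by move=> i; rewrite /m1; case: eqP => _ //; rewrite lexx ler01.
have hb' (m : 'I_n -> R) (c : R) : c * c = c -> (forall j, m j = if j == i0 then c else mu0 j) ->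
    forall i : 'I_n, (k <= i)%N -> m i * m i = m i.
  move=> hc hm i hi; rewrite hm; case: eqP => [//|/eqP ne]; apply: hb.
  rewrite ltn_neqAle hi andbT; apply: contra ne => /eqP e.
  by apply/eqP/val_inj; rewrite /= e.
have [m0' [b0 le0]] := IH m0 hm0 (hb' m0 0 (mulr0 0) (fun j => erefl)).
have [m1' [b1 le1]] := IH m1 hm1 (hb' m1 1 (mulr1 1) (fun j => erefl)).
set t := mu0 i0.
have ht : 0 <= t <= 1 by apply: hmu.
have hconv : forall j, mu0 j = (1 - t) * m0 j + t * m1 j.
  move=> j; rewrite /m0 /m1; case: eqP => [->|_]; first by rewrite /t; ring.
  ring.
have hc := FF_concave ht hr hs hm0 hm1 hconv.
have [le01|le10] := lerP (FF r s m0) (FF r s m1).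
  exists m0'; split => //; apply: le_trans le0 _; apply: le_trans hc.
  case/andP: ht => ??; nra.
exists m1'; split => //; apply: le_trans le1 _; apply: le_trans hc.
case/andP: ht => ??; nra.
Qed.

End Real.

Local Open Scope complex_scope.
Section Mx.
Variable R : realType.
Local Notation C := (R[i]).

Lemma hadjE m n (A : 'M[C]_(m, n)) : adj A = map_mx Num.conj (A^T).
Proof. by apply/matrixP => i j; rewrite !mxE. Qed.

Lemma hadj_ts m n (A : 'M[C]_(m, n)) : adj A = (A ^t*)%sesqui.
Proof. by apply/matrixP => i j; rewrite !mxE. Qed.

Lemma hadjK m n (A : 'M[C]_(m, n)) : adj (adj A) = A.
Proof. by apply/matrixP => i j; rewrite !mxE conjcK. Qed.

Lemma hadjD m n (A B : 'M[C]_(m, n)) : adj (A + B) = adj A + adj B.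
Proof. by apply/matrixP => i j; rewrite !mxE rmorphD. Qed.

Lemma hadjN m n (A : 'M[C]_(m, n)) : adj (- A) = - adj A.
Proof. by apply/matrixP => i j; rewrite !mxE rmorphN. Qed.

Lemma hadjB m n (A B : 'M[C]_(m, n)) : adj (A - B) = adj A - adj B.
Proof. by rewrite hadjD hadjN. Qed.

Lemma hadjZ m n c (A : 'M[C]_(m, n)) : adj (c *: A) = conjc c *: adj A.
Proof. by apply/matrixP => i j; rewrite !mxE rmorphM. Qed.

Lemma hadj0 m n : adj (0 : 'M[C]_(m, n)) = 0.
Proof. by apply/matrixP => i j; rewrite !mxE conjc0. Qed.

Lemma hadj1 n : adj (1%:M : 'M[C]_n) = 1%:M.
Proof. by apply/matrixP => i j; rewrite !mxE conjc_nat eq_sym. Qed.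

Lemma hadjM m n p (A : 'M[C]_(m, n)) (B : 'M[C]_(n, p)) :
  adj (A *m B) = adj B *m adj A.
Proof.
apply/matrixP => i j; rewrite !mxE rmorph_sum; apply: eq_bigr => k _.
by rewrite !mxE rmorphM mulrC.
Qed.

Lemma hadj11 (M : 'M[C]_1) : adj M 0 0 = conjc (M 0 0).
Proof. by rewrite !mxE. Qed.

Lemma ge0_complex (z : C) : 0 <= z -> z = (complex.Re z)%:C /\ 0 <= complex.Re z.
Proof. by case: z => a b; rewrite lecE /= => /andP[/eqP -> h]. Qed.

Lemma cReD (x y : C) : complex.Re (x + y) = complex.Re x + complex.Re y.
Proof. by case: x; case: y. Qed.

Lemma cReN (x : C) : complex.Re (- x) = - complex.Re x.
Proof. by case: x. Qed.

Lemma cReB (x y : C) : complex.Re (x - y) = complex.Re x - complex.Re y.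
Proof. by rewrite cReD cReN. Qed.

Lemma cReMr (z : C) r : complex.Re (z * r%:C) = complex.Re z * r.
Proof. by case: z => a b /=; rewrite mulr0 subr0. Qed.

Lemma cReMl (z : C) r : complex.Re (r%:C * z) = r * complex.Re z.
Proof. by rewrite mulrC cReMr mulrC. Qed.

Lemma cRe_sum n (F : 'I_n -> C) : complex.Re (\sum_i F i) = \sum_i complex.Re (F i).
Proof. by apply: (big_morph _ cReD). Qed.

Lemma cRe_real r : complex.Re (r%:C : C) = r.
Proof. by []. Qed.

Lemma conjcR (r : R) : conjc (r%:C) = r%:C :> C.
Proof. by apply/eqP; rewrite eq_complex /= oppr0 !eqxx. Qed.

Lemma conjcM (x y : C) : conjc (x * y) = conjc x * conjc y.
Proof. exact: rmorphM. Qed.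

Definition qf n (u : 'cV[C]_n) (X : 'M[C]_n) (w : 'cV[C]_n) : C := (adj u *m X *m w) 0 0.

Lemma dot_ge0 m (w : 'cV[C]_m) : 0 <= (adj w *m w) 0 0.
Proof.
rewrite !mxE; apply: sumr_ge0 => k _; rewrite !mxE mulrC.
exact: mulcJ_ge0.
Qed.

Lemma dot_eq0 m (w : 'cV[C]_m) : (adj w *m w) 0 0 = 0 -> w = 0.
Proof.
rewrite !mxE => /eqP; rewrite psumr_eq0; last first.
  by move=> k _; rewrite !mxE mulrC; exact: mulcJ_ge0.
move=> /allP h; apply/matrixP => i j; rewrite ord1 mxE.
have /h : i \in index_enum 'I_m by rewrite mem_index_enum.
rewrite /= !mxE mulf_eq0 conjc_eq0 => /orP[] /eqP //.
Qed.

Lemma psd_gram m n (B : 'M[C]_(m, n)) : psd (adj B *m B).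
Proof.
split; first by rewrite hadjM hadjK.
move=> v; rewrite !mulmxA -hadjM -mulmxA; exact: dot_ge0.
Qed.

Lemma psd_congr m n (A : 'M[C]_m) (B : 'M[C]_(m, n)) : psd A -> psd (adj B *m A *m B).
Proof.
move=> [hA pA]; split; first by rewrite !hadjM hadjK hA mulmxA.
move=> v; have := pA (B *m v); rewrite hadjM !mulmxA; done.
Qed.

Lemma psdD n (A B : 'M[C]_n) : psd A -> psd B -> psd (A + B).
Proof.
move=> [hA pA] [hB pB]; split; first by rewrite hadjD hA hB.
by move=> v; rewrite mulmxDr mulmxDl mxE addr_ge0.
Qed.

Lemma proj_gram n (P : 'M[C]_n) : projection P -> P = adj P *m P.
Proof. by case=> h1 h2; rewrite h2 h1. Qed.

Lemma proj_psd n (P : 'M[C]_n) : projection P -> psd P.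
Proof. by move=> hP; rewrite (proj_gram hP); apply: psd_gram. Qed.

Lemma proj_compl n (P : 'M[C]_n) : projection P -> projection (1%:M - P).
Proof.
case=> h1 h2; split; last by rewrite hadjB hadj1 h2.
by rewrite mulmxBl mul1mx mulmxBr mulmx1 h1 subrr subr0.
Qed.

Lemma delta_adj n (i : 'I_n) : adj (delta_mx i 0 : 'cV[C]_n) = delta_mx 0 i.
Proof.
apply/matrixP => a b; rewrite !mxE.
by rewrite conjc_nat andbC.
Qed.

Lemma qf_delta n (X : 'M[C]_n) i j : qf (delta_mx i 0) X (delta_mx j 0) = X i j.
Proof.
by rewrite /qf delta_adj -rowE -colE !mxE.
Qed.


Lemma qf_deltal n (X : 'M[C]_n) i w : qf (delta_mx i 0) X w = (X *m w) i 0.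
Proof. by rewrite /qf delta_adj -mulmxA -rowE !mxE. Qed.

Lemma qf_expand n (X : 'M[C]_n) u w c :
  qf (u + c *: w) X (u + c *: w) =
  qf u X u + c * qf u X w + conjc c * qf w X u + conjc c * c * qf w X w.
Proof.
rewrite /qf hadjD hadjZ !mulmxDl !mulmxDr -!scalemxAl -!scalemxAr !mxE.
rewrite !mulrA; ring.
Qed.

Lemma qf_herm n (A : 'M[C]_n) u w : adj A = A -> qf u A w = conjc (qf w A u).
Proof. by move=> hA; rewrite /qf -hadj11 !hadjM hadjK hA mulmxA. Qed.

Lemma qf0 n (X : 'M[C]_n) : qf 0 X 0 = 0.
Proof. by rewrite /qf mulmx0 mxE. Qed.

Lemma polar n (X : 'M[C]_n) : (forall v, qf v X v = 0) -> X = 0.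
Proof.
move=> h; apply/matrixP => i j; rewrite mxE.
have hc c := h (delta_mx i 0 + c *: delta_mx j 0).
have hii := h (delta_mx i 0); have hjj := h (delta_mx j 0).
rewrite qf_delta in hii; rewrite qf_delta in hjj.
have e1 := hc 1.
rewrite qf_expand !qf_delta hii hjj !mulr0 addr0 add0r conjc1 !mul1r in e1.
have e2 := hc 'i%C.
rewrite qf_expand !qf_delta hii hjj !mulr0 addr0 add0r in e2.
have ci : conjc ('i%C : C) = - 'i%C by apply/eqP; rewrite eq_complex /= oppr0 !eqxx.
rewrite ci mulNr in e2.
have : 'i%C * (X i j - X j i) = 0 by rewrite mulrBr.
move/eqP; rewrite mulf_eq0 => /orP[/eqP hi|]; first by move: hi => /eqP; rewrite eq_complex /= oner_eq0 andbF.
rewrite subr_eq0 => /eqP hji.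
move: e1; rewrite hji => /eqP; rewrite -mulr2n mulrn_eq0 /= => /eqP //.
Qed.

Lemma psd_diag n (A : 'M[C]_n) i : psd A -> 0 <= A i i.
Proof. by case=> _ h; have := h (delta_mx i 0); rewrite -/(qf _ _ _) qf_delta. Qed.

Lemma psd_null n (A : 'M[C]_n) x : psd A -> qf x A x = 0 -> A *m x = 0.
Proof.
move=> [hA pA] hx; apply/matrixP => i k; rewrite ord1 [RHS]mxE.
rewrite -qf_deltal.
set y := delta_mx i 0; set z := qf y A x.
have [ha ar0] := ge0_complex (pA y); set ar := complex.Re _ in ha ar0.
rewrite -/(qf y A y) in ha.
have [hN Nr0] := ge0_complex (mulcJ_ge0 z); set Nr := complex.Re _ in hN Nr0.
set t := (ar + 1)^-1.
have t0 : 0 < t by rewrite invr_gt0; lra.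
have ar1 : 0 < ar + 1 by lra.
have tE : t * (ar + 1) = 1 by rewrite /t mulVf // gt_eqF.
have g := pA (x + ((- t)%:C * z) *: y).
rewrite -/(qf _ _ _) qf_expand hx (qf_herm _ _ hA) -/z -/(qf _ _ _) -/(qf y A y) in g.
rewrite conjcM conjcR in g.
have eE : 0 + (- t)%:C * z * conjc z + (- t)%:C * conjc z * z +
     (- t)%:C * conjc z * ((- t)%:C * z) * qf y A y =
     ((- t) * Nr + (- t) * Nr + (- t) * (- t) * ar * Nr)%:C.
  rewrite ha.
  have -> : 0 + (- t)%:C * z * conjc z + (- t)%:C * conjc z * z +
     (- t)%:C * conjc z * ((- t)%:C * z) * ar%:C =
     (- t)%:C * (z * conjc z) + (- t)%:C * (z * conjc z) +
     (- t)%:C * (- t)%:C * ar%:C * (z * conjc z) by ring.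
  by rewrite hN !rmorphD !rmorphM.
rewrite eE ler0c in g.
have hNr : Nr = 0.
  have tar : t * ar = 1 - t by rewrite -tE mulrDr mulr1 addrK.
  have e3 : (- t) * Nr + (- t) * Nr + (- t) * (- t) * ar * Nr =
      - (t * Nr) - (t * Nr) * t.
    have -> : (- t) * (- t) * ar * Nr = t * Nr * (t * ar) by ring.
    rewrite tar; ring.
  rewrite e3 in g.
  have p1 : 0 <= t * Nr by rewrite mulr_ge0 // ltW.
  have p2 : 0 <= t * Nr * t by rewrite mulr_ge0 // ltW.
  have tN : t * Nr = 0 by lra.
  by move/eqP: tN; rewrite mulf_eq0 gt_eqF //= => /eqP.
have : z * conjc z = 0 by rewrite hN hNr.
by move/eqP; rewrite mulf_eq0 conjc_eq0 orbb => /eqP.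
Qed.

Lemma supp_herm n (A : 'M[C]_n) : adj (supp A) = supp A.
Proof.
rewrite /supp; set S := proj_ortho A.
have := proj_ortho_compl_sub A (1%:M : 'M[C]_n); rewrite mul1mx => /orthomx1P h1.
have := proj_ortho_sub A (1%:M : 'M[C]_n); rewrite mul1mx => /submxP [K hK].
have h3 : (1%:M - S) *m adj S = 0.
  have h1' : (1%:M - S) *m adj A = 0 by rewrite hadj_ts.
  rewrite -/S in hK; rewrite [X in adj X]hK hadjM mulmxA.
  by rewrite h1' mul0mx.
have h4 : adj S = S *m adj S.
  by apply/eqP; rewrite -subr_eq0 -{1}[adj S]mul1mx -mulmxBl h3.
have h5 : adj (S *m adj S) = S *m adj S by rewrite hadjM hadjK.
by rewrite {1}h4 -h5 -h4 hadjK.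
Qed.

Lemma supp_proj n (A : 'M[C]_n) : projection (supp A).
Proof. split; [exact: proj_ortho_proj | exact: supp_herm]. Qed.

Lemma supp_ker n (A B : 'M[C]_n) (y : 'cV[C]_n) :
  loewner_le (supp A) (supp B) -> B *m y = 0 -> A *m y = 0.
Proof.
move=> [_ hL] hy.
have := proj_ortho_sub B (1%:M : 'M[C]_n); rewrite mul1mx => /submxP [K hK].
have hBy : supp B *m y = 0 by rewrite /supp hK -mulmxA hy mulmx0.
have := hL y; rewrite mulmxBr mulmxBl -(mulmxA (adj y) (supp B)) hBy mulmx0 sub0r mxE.
move=> hge.
have [_ hp2] := proj_psd (supp_proj A).
have q0 : qf y (supp A) y = 0.
  apply/le_anti/andP; split; last exact: hp2.
  by rewrite -oppr_ge0.
have hSy : supp A *m y = 0.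
  apply: dot_eq0; move: q0; rewrite /qf {1}(proj_gram (supp_proj A)).
  by rewrite !mulmxA -hadjM -mulmxA.
have hA : A = A *m supp A by rewrite /supp proj_ortho_id.
by rewrite hA -mulmxA hSy mulmx0.
Qed.

Lemma tr_psd_ge0 n (A : 'M[C]_n) : psd A -> 0 <= \tr A.
Proof. by move=> hA; rewrite /mxtrace; apply: sumr_ge0 => i _; exact: psd_diag. Qed.

Lemma tr_gram_ge0 n m (X : 'M[C]_n) (B : 'M[C]_(m, n)) :
  psd X -> 0 <= \tr (X *m (adj B *m B)).
Proof.
move=> hX; rewrite mulmxA mxtrace_mulC mulmxA -{1}[B]hadjK.
by apply: tr_psd_ge0; apply: psd_congr.
Qed.

Lemma trRD n (X A B : 'M[C]_n) : trR X (A + B) = trR X A + trR X B.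
Proof. by rewrite /trR mulmxDr mxtraceD cReD. Qed.

Lemma trRB n (X A B : 'M[C]_n) : trR X (A - B) = trR X A - trR X B.
Proof. by rewrite /trR mulmxBr raddfB cReB. Qed.

Lemma trR1 n (X : 'M[C]_n) : trR X 1%:M = complex.Re (\tr X).
Proof. by rewrite /trR mulmx1. Qed.

Lemma trR_gram_ge0 n m (X : 'M[C]_n) (B : 'M[C]_(m, n)) : psd X -> 0 <= trR X (adj B *m B).
Proof. by move=> hX; have [_ h] := ge0_complex (tr_gram_ge0 B hX). Qed.

Lemma trR_proj_ge0 n (X P : 'M[C]_n) : psd X -> projection P -> 0 <= trR X P.
Proof. by move=> hX hP; rewrite (proj_gram hP); apply: trR_gram_ge0. Qed.

Lemma tr_proj_real n (X P : 'M[C]_n) : psd X -> projection P -> \tr (X *m P) = (trR X P)%:C.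
Proof.
by move=> hX hP; have [h _] := ge0_complex (tr_gram_ge0 P hX); rewrite -(proj_gram hP) in h.
Qed.

End Mx.

Section Spec.
Variable R : realType.
Local Notation C := (R[i]).

Lemma realCB (a b : R) : (a - b)%:C = a%:C - b%:C :> C.
Proof. exact: rmorphB. Qed.
Lemma realCM (a b : R) : (a * b)%:C = a%:C * b%:C :> C.
Proof. exact: rmorphM. Qed.
Lemma realC1 : (1 : R)%:C = 1 :> C.
Proof. by []. Qed.

Definition Tm n (U : 'M[C]_n) (mu : 'I_n -> R) : 'M[C]_n :=
  adj U *m diag_mx (\row_i (mu i)%:C) *m U.

Lemma unitary_adj n (U : 'M[C]_n) : U \is unitarymx -> U *m adj U = 1%:M /\ adj U *m U = 1%:M.
Proof.
move=> hU; split; first by rewrite hadj_ts; apply/unitarymxP.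
by have := mulmxKtV (1%:M : 'M[C]_n) hU erefl; rewrite mul1mx hadj_ts.
Qed.

Lemma Tm_compl n (U : 'M[C]_n) mu : U \is unitarymx ->
  1%:M - Tm U mu = Tm U (fun i => 1 - mu i).
Proof.
move=> hU; have [h1 h2] := unitary_adj hU; rewrite /Tm.
have -> : diag_mx (\row_i (1 - mu i)%:C) = 1%:M - diag_mx (\row_i (mu i)%:C) :> 'M[C]_n.
  apply/matrixP => a b; rewrite !mxE; case: (a == b); rewrite ?mulr1n ?mulr0n ?subr0 //.
  by rewrite realCB.
by rewrite mulmxBr mulmxBl mulmx1 h2.
Qed.

Lemma trR_Tm n (X U : 'M[C]_n) mu :
  trR X (Tm U mu) = \sum_i mu i * complex.Re ((U *m X *m adj U) i i).
Proof.
rewrite /trR /Tm !mulmxA mxtrace_mulC !mulmxA mul_mx_diag /mxtrace cRe_sum.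
by apply: eq_bigr => i _; rewrite !mxE cReMr mulrC.
Qed.

Lemma adj_diag_real n (mu : 'I_n -> R) :
  adj (diag_mx (\row_i (mu i)%:C)) = diag_mx (\row_i (mu i)%:C) :> 'M[C]_n.
Proof.
apply/matrixP => a b; rewrite !mxE; have [->|ne] := eqVneq a b.
  by rewrite mulr1n conjcR.
by rewrite !mulr0n conjc0.
Qed.

Lemma Tm_proj n (U : 'M[C]_n) mu : U \is unitarymx ->
  (forall i, mu i * mu i = mu i) -> projection (Tm U mu).
Proof.
move=> hU hmu; have [h1 h2] := unitary_adj hU.
split; last by rewrite /Tm !hadjM hadjK adj_diag_real mulmxA.
rewrite /Tm !mulmxA -(mulmxA _ U (adj U)) h1 mulmx1 -(mulmxA _ (diag_mx _) (diag_mx _)).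
rewrite mulmx_diag; congr (_ *m diag_mx _ *m _); apply/rowP => j.
by rewrite !mxE -realCM hmu.
Qed.

Lemma conj_diag_ge0 n (X U : 'M[C]_n) i : psd X -> 0 <= complex.Re ((U *m X *m adj U) i i).
Proof.
move=> hX; have := psd_congr (adj U) hX; rewrite hadjK => /(psd_diag i).
by case/ge0_complex.
Qed.

Lemma test_spectral n (T : 'M[C]_n) : test T ->
  exists U mu, [/\ U \is unitarymx, (forall i, 0 <= mu i <= 1) & T = Tm U mu].
Proof.
move=> [hT hT'].
have hh : adj T = T := hT.1.
have nT : T \is normalmx by apply/normalmxP; rewrite -hadj_ts hh.
move/orthomx_spectralP: nT => eTsp.
have hU0 := spectral_unitarymx T.
rewrite invmx_unitary // in eTsp.
move: (spectralmx T) (spectral_diag T) hU0 eTsp => U d hU eT.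
rewrite -hadj_ts in eT.
have [h1 h2] := unitary_adj hU.
have eD : U *m T *m adj U = diag_mx d.
  by rewrite eT !mulmxA h1 mul1mx -mulmxA h1 mulmx1.
have pT := psd_congr (adj U) hT; rewrite hadjK eD in pT.
have pT' := psd_congr (adj U) hT'.
rewrite hadjK mulmxBr mulmxBl mulmx1 h1 eD in pT'.
have d0 i : 0 <= d 0 i by have := psd_diag i pT; rewrite mxE eqxx mulr1n.
have d1 i : 0 <= 1 - d 0 i by have := psd_diag i pT'; rewrite !mxE eqxx mulr1n.
exists U, (fun i => complex.Re (d 0 i)); split => //.
  move=> i; have [e r0] := ge0_complex (d0 i); rewrite r0 /=.
  have := d1 i; rewrite e -realC1 -realCB ler0c; lra.
rewrite {1}eT /Tm; congr (_ *m diag_mx _ *m _); apply/rowP => i; rewrite mxE.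
exact: (ge0_complex (d0 i)).1.
Qed.

Variable alpha : R.
Hypothesis a0 : 0 < alpha.
Hypothesis a1 : alpha < 1.

Definition Qt n (rho sigma T : 'M[C]_n) :=
  ff alpha (trR rho T) (trR sigma T) + ff alpha (trR rho (1%:M - T)) (trR sigma (1%:M - T)).

Lemma Qt_ge0 n (rho sigma T : 'M[C]_n) : 0 <= Qt rho sigma T.
Proof. by rewrite /Qt addr_ge0 // ff_ge0. Qed.

Lemma Dalpha_test n (rho sigma T : 'M[C]_n) :
  Dalpha alpha (test_ch T rho) (test_ch T sigma) = DQ alpha (Qt rho sigma T).
Proof. by rewrite /Dalpha /DQ big_ord_recl big_ord1 /test_ch /=. Qed.

Lemma test_to_proj n (rho sigma T : 'M[C]_n) : psd rho -> psd sigma -> test T ->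
  exists Pi, projection Pi /\ Qt rho sigma Pi <= Qt rho sigma T.
Proof.
move=> hr hs hT; have [U [mu [hU hmu eT]]] := test_spectral hT.
pose r := fun i => complex.Re ((U *m rho *m adj U) i i).
pose s := fun i => complex.Re ((U *m sigma *m adj U) i i).
have hQ m : Qt rho sigma (Tm U m) = FF alpha r s m.
  by rewrite /Qt /FF (Tm_compl _ hU) !trR_Tm.
have [mu' [hb hle]] := binarize a0 a1 (fun i => conj_diag_ge0 U i hr) (fun i => conj_diag_ge0 U i hs) hmu.
exists (Tm U mu'); split; first exact: Tm_proj.
by rewrite eT !hQ.
Qed.

End Spec.

Section Main.
Variable R : realType.
Local Notation C := (R[i]).

Lemma realCV (r : R) : (r^-1)%:C = (r%:C)^-1 :> C.
Proof. exact: fmorphV. Qed.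

Definition E1 n (v : 'cV[C]_n) : 'M[C]_n := ((adj v *m v) 0 0)^-1 *: (v *m adj v).

Lemma kappa_real n (v : 'cV[C]_n) :
  (adj v *m v) 0 0 = (complex.Re ((adj v *m v) 0 0))%:C /\ 0 <= complex.Re ((adj v *m v) 0 0).
Proof. exact: ge0_complex (dot_ge0 v). Qed.

Lemma kappa_neq0 n (v : 'cV[C]_n) : v != 0 -> (adj v *m v) 0 0 != 0.
Proof. by move=> v0; apply: contra v0 => /eqP /dot_eq0 ->. Qed.

Lemma E1_proj n (v : 'cV[C]_n) : v != 0 -> projection (E1 v).
Proof.
move=> v0; have k0 := kappa_neq0 v0; have [kr _] := kappa_real v.
split.
  rewrite /E1 -scalemxAl -scalemxAr scalerA.
  have -> : v *m adj v *m (v *m adj v) = (adj v *m v) 0 0 *: (v *m adj v).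
    by rewrite mulmxA -(mulmxA v) {1}(mx11_scalar (adj v *m v)) mul_mx_scalar -scalemxAl.
  by rewrite scalerA -mulrA mulVf // mulr1.
rewrite /E1 hadjZ hadjM hadjK; congr (_ *: _).
by rewrite conjc_inv {1}kr conjcR -kr.
Qed.

Lemma qf_lin n (v : 'cV[C]_n) a b (A B : 'M[C]_n) :
  qf v (a *: A - b *: B) v = a * qf v A v - b * qf v B v.
Proof.
by rewrite /qf mulmxBr mulmxBl -!scalemxAr -!scalemxAl !mxE.
Qed.

Lemma trR_E1 n (X Pi : 'M[C]_n) (v : 'cV[C]_n) :
  trR X (Pi *m E1 v *m Pi) =
  (complex.Re ((adj v *m v) 0 0))^-1 * complex.Re (qf v (Pi *m X *m Pi) v).
Proof.
have [kr _] := kappa_real v.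
rewrite /trR /E1 -scalemxAr -scalemxAl -scalemxAr mxtraceZ.
rewrite !mulmxA -(mulmxA (X *m Pi *m v)) mxtrace_mulC trace_mx11.
rewrite kr -realCV cReMl /qf !mulmxA.
by [].
Qed.

Variable alpha : R.
Hypothesis a0 : 0 < alpha.
Hypothesis a1 : alpha < 1.

Lemma DalphaE k (p q : 'I_k -> R) :
  Dalpha alpha p q = DQ alpha (\sum_x ff alpha (p x) (q x)).
Proof. by []. Qed.

Lemma main_eq n (rho sigma Pi : 'M[C]_n) : psd rho -> psd sigma -> projection Pi ->
  (forall k (M : 'I_k -> 'M[C]_n), povm M ->
     (Dalpha alpha (meas_ch M rho) (meas_ch M sigma) <= DQ alpha (Qt alpha rho sigma Pi))%E) ->
  \tr (sigma *m Pi) *: (Pi *m rho *m Pi) = \tr (rho *m Pi) *: (Pi *m sigma *m Pi).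
Proof.
move=> hr hs hP H.
apply/eqP; rewrite -subr_eq0; apply/eqP; apply: polar => v.
have [->|v0] := eqVneq v 0; first by rewrite /qf hadj0 mulmx0 mxE.
set E := E1 v.
have hE := E1_proj v0.
have hE' := proj_compl hE.
have gram (F : 'M[C]_n) : projection F -> Pi *m F *m Pi = adj (F *m Pi) *m (F *m Pi).
  by move=> hF; rewrite hadjM hF.2 hP.2 mulmxA -(mulmxA Pi F F) hF.1.
pose M : 'I_3 -> 'M[C]_n := fun i =>
  if (i : nat) == 0%N then Pi *m E *m Pi
  else if (i : nat) == 1%N then Pi *m (1%:M - E) *m Pi else 1%:M - Pi.
have hM : povm M.
  split.
    move=> i; rewrite /M; case: ifP => _.
      by rewrite (gram E hE); apply: psd_gram.
    case: ifP => _.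
      by rewrite (gram _ hE'); apply: psd_gram.
    exact: proj_psd (proj_compl hP).
  rewrite !big_ord_recr big_ord0 /M /=.
  rewrite mulmxBr mulmxBl mulmx1 hP.1.
  by rewrite add0r [X in X + _]addrC subrK addrC subrK.
have := H 3 M hM; rewrite DalphaE !big_ord_recr big_ord0 /meas_ch /M /= add0r.
move=> /DQ_rev h.
have := h a1 (addr_ge0 (addr_ge0 (ff_ge0 _ _ _) (ff_ge0 _ _ _)) (ff_ge0 _ _ _)).
move=> hle.
have hsplit X : trR X Pi = trR X (Pi *m E *m Pi) + trR X (Pi *m (1%:M - E) *m Pi).
  by rewrite mulmxBr mulmxBl mulmx1 hP.1 trRB addrC subrK.
rewrite /Qt (hsplit rho) (hsplit sigma) lerD2r in hle.
have nn X : psd X -> 0 <= trR X (Pi *m E *m Pi).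
  by move=> hX; rewrite (gram E hE); apply: trR_gram_ge0.
have nn' X : psd X -> 0 <= trR X (Pi *m (1%:M - E) *m Pi).
  by move=> hX; rewrite (gram _ hE'); apply: trR_gram_ge0.
have heq := holder2_eq a0 a1 (nn _ hr) (nn _ hs) (nn' _ hr) (nn' _ hs) hle.
have s1 X : trR X (Pi *m (1%:M - E) *m Pi) = trR X Pi - trR X (Pi *m E *m Pi).
  by rewrite (hsplit X) addrAC subrr add0r.
rewrite !s1 !trR_E1 in heq.
have [kr kr0] := kappa_real v.
set ki := (complex.Re ((adj v *m v) 0 0))^-1 in heq.
have ki0 : ki != 0.
  rewrite invr_eq0; apply: contra (kappa_neq0 v0) => /eqP k0.
  by rewrite kr k0.
have hz X : psd X -> qf v (Pi *m X *m Pi) v = (complex.Re (qf v (Pi *m X *m Pi) v))%:C.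
  move=> hX; have := psd_congr Pi hX; rewrite hP.2 => -[_ /(_ v)].
  by case/ge0_complex.
set zr := complex.Re (qf v (Pi *m rho *m Pi) v) in heq hz.
set zs := complex.Re (qf v (Pi *m sigma *m Pi) v) in heq hz.
set tr := trR rho Pi in heq; set ts := trR sigma Pi in heq.
have key : ts * zr - tr * zs = 0.
  have e : ki * zr * (ts - ki * zs) - ki * zs * (tr - ki * zr) = ki * (ts * zr - tr * zs) by ring.
  rewrite heq subrr in e.
  by move/esym/eqP: e; rewrite mulf_eq0 (negbTE ki0) /= => /eqP.
rewrite qf_lin (tr_proj_real hs hP) (tr_proj_real hr hP) (hz _ hr) (hz _ hs).
by rewrite -/zr -/zs -!realCM -realCB -/tr -/ts key.
Qed.

End Main.

Section Fin.
Variable R : realType.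
Local Notation C := (R[i]).
Variable alpha : R.
Hypothesis a0 : 0 < alpha.
Hypothesis a1 : alpha < 1.

Lemma Qt_compl n (rho sigma P : 'M[C]_n) :
  Qt alpha rho sigma (1%:M - P) = Qt alpha rho sigma P.
Proof. by rewrite /Qt subKr addrC. Qed.

Lemma Dtest_le n (rho sigma P : 'M[C]_n) : psd rho -> psd sigma ->
  (forall Q, projection Q -> (DQ alpha (Qt alpha rho sigma Q) <= DQ alpha (Qt alpha rho sigma P))%E) ->
  (Dtest alpha rho sigma <= DQ alpha (Qt alpha rho sigma P))%E.
Proof.
move=> hr hs hmax; apply: ge_ereal_sup => _ [T hT <-].
have [Pi [hPi hle]] := test_to_proj a0 a1 hr hs hT.
rewrite Dalpha_test; apply: le_trans (hmax Pi hPi).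
exact: (DQ_le a1 (Qt_ge0 alpha rho sigma Pi) hle).
Qed.

Lemma col_zero n m (A : 'M[C]_(m, n)) : (forall w : 'cV[C]_n, A *m w = 0) -> A = 0.
Proof.
move=> h; apply/matrixP => a b; have := h (delta_mx b 0); rewrite -colE.
by move/matrixP/(_ a 0); rewrite !mxE.
Qed.

Lemma zero_from n (X Y Pi : 'M[C]_n) : psd X -> projection Pi ->
  loewner_le (supp Y) (supp X) -> Pi *m X *m Pi = 0 ->
  trR X Pi = 0 /\ trR Y Pi = 0.
Proof.
move=> hX hP hL h0.
have hXP : X *m Pi = 0.
  apply: col_zero => w; rewrite -mulmxA; apply: psd_null => //.
  by rewrite /qf hadjM hP.2 !mulmxA -(mulmxA (adj w) Pi X) -(mulmxA (adj w) (Pi *m X) Pi) h0 mulmx0 mul0mx mxE.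
have hYP : Y *m Pi = 0.
  apply: col_zero => w; rewrite -mulmxA; apply: (supp_ker hL).
  by rewrite mulmxA hXP mul0mx.
by rewrite /trR hXP hYP mxtrace0.
Qed.

Lemma Qt_one n (rho sigma Pi : 'M[C]_n) : density rho -> density sigma ->
  trR rho Pi = 0 -> trR sigma Pi = 0 -> Qt alpha rho sigma Pi = 1.
Proof.
move=> [_ tr] [_ ts] h1 h2.
by rewrite /Qt !trRB !trR1 tr ts h1 h2 subr0 ff0l // add0r; exact: ff11.
Qed.

Lemma distinguish n (rho sigma : 'M[C]_n) : density rho -> density sigma -> rho != sigma ->
  exists E, projection E /\ Qt alpha rho sigma E < 1.
Proof.
move=> [hr tr] [hs ts] hne.
have [v hv] : exists v, qf v (rho - sigma) v != 0.
  apply: contrapT => hn; move/negP: hne; apply; apply/eqP.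
  apply/eqP; rewrite -subr_eq0; apply/eqP; apply: polar => v.
  by apply/eqP; apply: contrapT => hv; apply: hn; exists v; exact/negP.
have v0 : v != 0 by apply: contra hv => /eqP ->; rewrite qf0.
have hE := E1_proj v0.
exists (E1 v); split => //.
have e X : trR X (E1 v) = (complex.Re ((adj v *m v) 0 0))^-1 * complex.Re (qf v X v).
  by have h := trR_E1 X 1%:M v; rewrite !mul1mx !mulmx1 in h.
have hz X : psd X -> qf v X v = (complex.Re (qf v X v))%:C.
  by move=> hX; case: (ge0_complex (hX.2 v)).
have [kr kr0] := kappa_real v.
have ki0 : (complex.Re ((adj v *m v) 0 0))^-1 != 0.
  rewrite invr_eq0; apply: contra (kappa_neq0 v0) => /eqP k0.
  by rewrite kr k0.
set p := trR rho (E1 v); set q := trR sigma (E1 v).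
have pq : p != q.
  apply: contra hv => /eqP; rewrite /p /q !e => /(mulfI ki0) epq.
  have -> : qf v (rho - sigma) v = qf v rho v - qf v sigma v.
    by have := qf_lin v 1 1 rho sigma; rewrite !scale1r !mul1r.
  by rewrite (hz _ hr) (hz _ hs) epq subrr.
have c1 X : density X -> trR X (1%:M - E1 v) = 1 - trR X (E1 v).
  by move=> [_ tX]; rewrite trRB trR1 tX.
have p0 := trR_proj_ge0 hr hE; have q0 := trR_proj_ge0 hs hE.
have p1 := trR_proj_ge0 hr (proj_compl hE); have q1 := trR_proj_ge0 hs (proj_compl hE).
rewrite (c1 _ (conj hr tr)) in p1; rewrite (c1 _ (conj hs ts)) in q1.
rewrite /Qt (c1 _ (conj hr tr)) (c1 _ (conj hs ts)) -/p -/q.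
have hle := holder2 a0 a1 p0 q0 p1 q1.
rewrite !subrKC ff11 in hle.
rewrite lt_neqAle hle andbT; apply/negP => /eqP heq.
have := holder2_eq a0 a1 p0 q0 p1 q1.
rewrite !subrKC ff11 heq lexx => /(_ isT) epq.
move/negP: pq; apply; apply/eqP; move: epq; lra.
Qed.

End Fin.

Local Close Scope complex_scope.

Theorem mainTheorem18 (R : realType) (n : nat) (rho sigma : 'M[R[i]]_n)
    (alpha : R) :
  density rho -> density sigma -> 0 < alpha < 1 ->
  Dtest alpha rho sigma = Dmeas alpha rho sigma ->
  forall P : 'M[R[i]]_n, projection P ->
  (forall Q : 'M[R[i]]_n, projection Q ->
     (Dalpha alpha (test_ch Q rho) (test_ch Q sigma)
       <= Dalpha alpha (test_ch P rho) (test_ch P sigma))%E) ->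
  let Pp := 1%:M - P in
  [/\ \tr (sigma *m P) *: (P *m rho *m P) = \tr (rho *m P) *: (P *m sigma *m P),
      \tr (sigma *m Pp) *: (Pp *m rho *m Pp)
        = \tr (rho *m Pp) *: (Pp *m sigma *m Pp) &
      rho != sigma ->
      (loewner_le (supp rho) (supp sigma) ->
         P *m sigma *m P != 0 /\ Pp *m sigma *m Pp != 0) /\
      (loewner_le (supp sigma) (supp rho) ->
         P *m rho *m P != 0 /\ Pp *m rho *m Pp != 0)].
Proof.
move=> hd hd' /andP[a0 a1] hDeq P hP hmax Pp.
have hr := hd.1; have hs := hd'.1.
have hmaxQ : forall Q, projection Q ->
    (DQ alpha (Qt alpha rho sigma Q) <= DQ alpha (Qt alpha rho sigma P))%E.
  by move=> Q hQ; have := hmax Q hQ; rewrite !Dalpha_test.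
have hDt := Dtest_le a0 a1 hr hs hmaxQ.
have hPp : projection Pp := proj_compl hP.
have hQPp : Qt alpha rho sigma Pp = Qt alpha rho sigma P by rewrite /Pp Qt_compl.
have H : forall Pi, projection Pi -> Qt alpha rho sigma Pi = Qt alpha rho sigma P ->
    forall k (M : 'I_k -> 'M[R[i]]_n), povm M ->
    (Dalpha alpha (meas_ch M rho) (meas_ch M sigma) <= DQ alpha (Qt alpha rho sigma Pi))%E.
  move=> Pi hPi hQ k M hM; rewrite hQ; apply: (le_trans _ hDt); rewrite hDeq.
  apply: ereal_sup_ubound; exists k, M; split => //.
have contra_case : forall Pi, projection Pi -> Qt alpha rho sigma Pi = Qt alpha rho sigma P ->
    trR rho Pi = 0 -> trR sigma Pi = 0 -> rho != sigma -> False.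
  move=> Pi hPi hQ h1 h2 hne.
  have q1 := Qt_one a0 hd hd' h1 h2; rewrite hQ in q1.
  have [E [hE hlt]] := distinguish a0 a1 hd hd' hne.
  have := hmaxQ E hE; rewrite q1 DQ1.
  have := DQ_lt a1 (Qt_ge0 alpha rho sigma E) hlt; rewrite DQ1.
  by move=> /lt_le_trans h /h; rewrite ltxx.
split.
- exact (main_eq a0 a1 hr hs hP (H P hP erefl)).
- exact (main_eq a0 a1 hr hs hPp (H Pp hPp hQPp)).
move=> hne; split => hL; split; apply/eqP => h0.
- have [t1 t2] := zero_from hs hP hL h0; exact: contra_case hP erefl t2 t1 hne.
- have [t1 t2] := zero_from hs hPp hL h0; exact: contra_case hPp hQPp t2 t1 hne.
- have [t1 t2] := zero_from hr hP hL h0; exact: contra_case hP erefl t1 t2 hne.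
- have [t1 t2] := zero_from hr hPp hL h0; exact: contra_case hPp hQPp t1 t2 hne.
Qed.
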